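(* Let $\underline x<\overline x$ and $g\in C^2([\underline x,\overline x])$ satisfy conditions (G1)–(G5) below. 1. The minimizer $(\hat m(x),\hat s_1(x),\hat s_2(x))$ of the infimum in (G2) is well defined for every $x\in[\underline x,\overline x]$. 2. Let $\hat\alpha(x)=\alpha(\hat m(x),\hat s_1(x),\hat s_2(x))$, and define $\hat\beta,\hat\gamma,\hat\theta_1,\hat\theta_2$ analogously. Then the functions $\hat\alpha$, $\hat\beta$, $\hat\gamma$, $\hat\theta_1$, $\hat\theta_2$, $\frac{\hat s_1(x)}{g'(x)}$, $\frac{\hat s_2(x)}{g'(x)}$ and $\frac{\hat\beta(x)}{g'(x)}$ are Lipschitz on $[\underline x,\overline x]$. 3. For $x\in[\underline x,\overline x]$, $$-\hat\alpha(x)g'(x)-\big(\hat m(x)+\hat\beta(x)\big)+\hat\gamma(x)\Big(\frac{x}{g'(x)}\Big)'=0.$$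
   Context: Parameters. - $\rho\in(-1,1)$. - $\mu_1,\mu_2,\sigma_1,\sigma_2>0$. - $\overline\lambda>0$ and $\underline\lambda\in(0,1)$. - $p\in(-\infty,1)\setminus\{0\}$, with $q=p/(1-p)$ and $\operatorname{sgn}(p)$ the sign of $p$. - $\delta>0$. Standing assumption: $$\delta>\frac{q}{2(1-\rho^2)}\Big(\big(\tfrac{\mu_1}{\sigma_1}\big)^2+\big(\tfrac{\mu_2}{\sigma_2}\big)^2-2\rho\tfrac{\mu_1\mu_2}{\sigma_1\sigma_2}\Big),\qquad \mu_1\ne\tfrac{\rho\mu_2\sigma_1}{\sigma_2},\qquad \mu_2\ne\tfrac{\rho\sigma_1\sigma_2}{1+q}.$$ Functions. For $m,s_1,s_2\in\mathbb R$ with $s_1\ne-\sigma_1$, define $$\theta_1(m,s_1,s_2)=\tfrac{\rho(\sigma_2s_2-\mu_2)}{(1-\rho^2)\sigma_2}-\tfrac{\mu_2s_2-(m+\mu_1+s_1\sigma_1+\frac12(s_1^2+s_2^2))\sigma_2}{(1-\rho^2)\sigma_2(s_1+\sigma_1)},\qquad \theta_2=\tfrac{\mu_2}{\sigma_2}-\rho\theta_1,$$ $$\alpha=(1+q)\delta-\tfrac{q(1+q)}2(\theta_1^2+\theta_2^2+2\rho\theta_1\theta_2),\qquad \beta=q\big((s_1+\rho s_2)\theta_1+(\rho s_1+s_2)\theta_2\big),\qquad \gamma=\tfrac12(s_1^2+s_2^2+2\rho s_1s_2).$$ Conditions (G1)–(G5) on $\underline x<\overline x$ and $g\in C^2([\underline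 x,\overline x])$: - (G1) if $\mu_1>\rho\mu_2\sigma_1/\sigma_2$ then $0<\underline x<\overline x$; if $\mu_1<\rho\mu_2\sigma_1/\sigma_2$ then $\underline x<\overline x<0$. - (G2) for $x\in[\underline x,\overline x]$, $$\inf_{m,s_1,s_2}\{-\alpha g(x)-(m+\beta)x+\gamma\tfrac{x}{g'(x)}+\operatorname{sgn}(p)\}=0.$$ - (G3) $g'(\underline x)=g'(\overline x)=0$ and $\int_{\underline x}^{\overline x}\frac{g'(x)}x\,dx=\log\frac{1+\overline\lambda}{1-\underline\lambda}$. - (G4) $q\,g(x)$, $q\,g(x)(g'(x)+1)-(1+q)xg'(x)$, $q(g(x)-xg'(x))$ and $g'(x)+1$ are strictly positive on $[\underline x,\overline x]$. - (G5) $g'(x)/x>0$ on $(\underline x,\overline x)$. *)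

(* Defs.v *)
From Stdlib Require Import Reals Lra.
From Coquelicot Require Import Coquelicot.
Open Scope R_scope.

Definition sgnR (p : R) : R := if Rlt_dec 0 p then 1 else -1.

Definition qof (p : R) : R := p / (1 - p).

Definition theta1 (rho mu1 mu2 sig1 sig2 : R) (m s1 s2 : R) : R :=
  rho * (sig2 * s2 - mu2) / ((1 - rho ^ 2) * sig2)
  - (mu2 * s2 - (m + mu1 + s1 * sig1 + / 2 * (s1 ^ 2 + s2 ^ 2)) * sig2)
    / ((1 - rho ^ 2) * sig2 * (s1 + sig1)).

Definition theta2 (rho mu1 mu2 sig1 sig2 : R) (m s1 s2 : R) : R :=
  mu2 / sig2 - rho * theta1 rho mu1 mu2 sig1 sig2 m s1 s2.

Definition alphaF (rho mu1 mu2 sig1 sig2 p delta : R) (m s1 s2 : R) : R :=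
  let q := qof p in
  let t1 := theta1 rho mu1 mu2 sig1 sig2 m s1 s2 in
  let t2 := theta2 rho mu1 mu2 sig1 sig2 m s1 s2 in
  (1 + q) * delta - q * (1 + q) / 2 * (t1 ^ 2 + t2 ^ 2 + 2 * rho * t1 * t2).

Definition betaF (rho mu1 mu2 sig1 sig2 p : R) (m s1 s2 : R) : R :=
  let q := qof p in
  let t1 := theta1 rho mu1 mu2 sig1 sig2 m s1 s2 in
  let t2 := theta2 rho mu1 mu2 sig1 sig2 m s1 s2 in
  q * ((s1 + rho * s2) * t1 + (rho * s1 + s2) * t2).

Definition gammaF (rho : R) (s1 s2 : R) : R :=
  / 2 * (s1 ^ 2 + s2 ^ 2 + 2 * rho * s1 * s2).

(* The objective of (G2), with values in the extended reals.
   g0 = g(x), g1 = g'(x).  When g'(x) = 0 (which by (G3)/(G5) happens exactly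
   at the end points, where x/g'(x) -> +oo), the term gamma * x / g'(x) is read
   as +oo if gamma > 0 and as 0 if gamma = 0 (convention 0 * oo = 0). *)
Definition objG (rho mu1 mu2 sig1 sig2 p delta : R) (x g0 g1 : R)
  (m s1 s2 : R) : Rbar :=
  let a := alphaF rho mu1 mu2 sig1 sig2 p delta m s1 s2 in
  let b := betaF rho mu1 mu2 sig1 sig2 p m s1 s2 in
  let c := gammaF rho s1 s2 in
  let base := - a * g0 - (m + b) * x + sgnR p in
  if Req_EM_T g1 0 then
    (if Req_EM_T c 0 then Finite base else p_infty)
  else Finite (base + c * (x / g1)).

Definition has_deriv_within (D : R -> Prop) (f : R -> R) (x l : R) : Prop :=
  forall eps : R, 0 < eps -> exists delta : R, 0 < delta /\
    forall y : R, D y -> 0 < Rabs (y - x) < delta ->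
      Rabs ((f y - f x) / (y - x) - l) < eps.

Definition continuous_within (D : R -> Prop) (f : R -> R) (x : R) : Prop :=
  forall eps : R, 0 < eps -> exists delta : R, 0 < delta /\
    forall y : R, D y -> Rabs (y - x) < delta -> Rabs (f y - f x) < eps.

Definition C2_on (a b : R) (g g1 g2 : R -> R) : Prop :=
  forall x, a <= x <= b ->
    has_deriv_within (fun y => a <= y <= b) g x (g1 x) /\
    has_deriv_within (fun y => a <= y <= b) g1 x (g2 x) /\
    continuous_within (fun y => a <= y <= b) g2 x.

Definition lipschitz_on (D : R -> Prop) (f : R -> R) : Prop :=
  exists L : R, forall x y, D x -> D y -> Rabs (f x - f y) <= L * Rabs (x - y).

Definition inf_is_zero (sig1 : R) (F : R -> R -> R -> Rbar) : Prop :=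
  (forall m s1 s2, s1 <> - sig1 -> Rbar_le (Finite 0) (F m s1 s2)) /\
  (forall eps, 0 < eps -> exists m s1 s2,
      s1 <> - sig1 /\ Rbar_lt (F m s1 s2) (Finite eps)).

(* Main.v *)
Require Import Defs.
From Stdlib Require Import Reals Lra Psatz.
From Coquelicot Require Import Coquelicot.
Open Scope R_scope.


Definition Mf (rho mu1 mu2 sig1 sig2 t s1 s2 : R) : R :=
  (1-rho^2)*(s1+sig1)*(t - rho*(sig2*s2-mu2)/((1-rho^2)*sig2))
  + mu2*s2/sig2 - mu1 - s1*sig1 - /2*(s1^2+s2^2).

Definition Ft (rho mu1 mu2 sig1 sig2 q delta sg k X G t s1 s2 : R) : R :=
  let a := mu2/sig2 in let t2 := a - rho*t in
  - ((1+q)*delta - q*(1+q)/2*(t^2+t2^2+2*rho*t*t2)) * G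
  - (Mf rho mu1 mu2 sig1 sig2 t s1 s2 + q*((s1+rho*s2)*t + (rho*s1+s2)*t2)) * X
  + gammaF rho s1 s2 * k + sg.

Definition Qf (rho q k X G v0 v1 v2 : R) : R :=
  q*(1+q)*G*(1-rho^2)/2*v0^2 - X*(1-rho^2)*(1+q)*v0*v1 + (X+k)*gammaF rho v1 v2.

Lemma theta1_Mf rho mu1 mu2 sig1 sig2 t s1 s2 :
  sig2 <> 0 -> 1 - rho^2 <> 0 -> s1 + sig1 <> 0 ->
  theta1 rho mu1 mu2 sig1 sig2 (Mf rho mu1 mu2 sig1 sig2 t s1 s2) s1 s2 = t.
Proof. intros. unfold theta1, Mf. field. auto. Qed.

Lemma Mf_theta1 rho mu1 mu2 sig1 sig2 m s1 s2 :
  sig2 <> 0 -> 1 - rho^2 <> 0 -> s1 + sig1 <> 0 ->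
  Mf rho mu1 mu2 sig1 sig2 (theta1 rho mu1 mu2 sig1 sig2 m s1 s2) s1 s2 = m.
Proof. intros. unfold theta1, Mf. field. auto. Qed.

Lemma Ft_expand rho mu1 mu2 sig1 sig2 q delta sg k X G t s1 s2 v0 v1 v2 :
  sig2 <> 0 -> 1 - rho^2 <> 0 ->
  Ft rho mu1 mu2 sig1 sig2 q delta sg k X G (t+v0) (s1+v1) (s2+v2)
  - Ft rho mu1 mu2 sig1 sig2 q delta sg k X G t s1 s2
  - Qf rho q k X G v0 v1 v2
  = v0 * (q*(1+q)*G*(1-rho^2)*t - X*(1-rho^2)*((1+q)*s1+sig1))
  + v1 * (- X*(1-rho^2)*(1+q)*t - X*((1+q)*rho*(mu2/sig2) - sig1) + (X+k)*(s1+rho*s2))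
  + v2 * (- X*((1+q)*(mu2/sig2) - rho*sig1) + (X+k)*(s2+rho*s1)).
Proof. intros. unfold Ft, Qf, Mf, gammaF. field. auto. Qed.

Definition Pv (q X G G1 : R) := q*G*(G1+1) - (1+q)*X*G1.
Definition S1v (sig1 q X G G1 : R) := sig1*(X - q*G)/Pv q X G G1.
Definition S2v (rho mu2 sig1 sig2 q X G G1 : R) :=
  ((1+q)*(mu2/sig2) - rho*sig1)/(G1+1) - rho*S1v sig1 q X G G1.
Definition tv (sig1 q X G s1 : R) := X*((1+q)*s1 + sig1)/(q*(1+q)*G).

Lemma grad1_0 rho mu2 sig1 sig2 q X G G1 :
  sig2 <> 0 -> q*G <> 0 -> 1+q <> 0 -> Pv q X G G1 <> 0 -> G1+1 <> 0 -> G1 <> 0 ->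
  let s1 := G1 * S1v sig1 q X G G1 in
  let s2 := G1 * S2v rho mu2 sig1 sig2 q X G G1 in
  let t := tv sig1 q X G s1 in
  - X*(1-rho^2)*(1+q)*t - X*((1+q)*rho*(mu2/sig2) - sig1) + (X+X/G1)*(s1+rho*s2) = 0.
Proof.
  intros. unfold t, s1, s2, tv, S2v, S1v. unfold Pv in *.
  assert (G <> 0) by (intro; subst; apply H0; ring).
  assert (q <> 0) by (intro; subst; apply H0; ring).
  field. repeat split; auto.
Qed.

Lemma grad2_0 rho mu2 sig1 sig2 q X G G1 :
  sig2 <> 0 -> q*G <> 0 -> 1+q <> 0 -> Pv q X G G1 <> 0 -> G1+1 <> 0 -> G1 <> 0 ->
  let s1 := G1 * S1v sig1 q X G G1 in
  let s2 := G1 * S2v rho mu2 sig1 sig2 q X G G1 in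
  - X*((1+q)*(mu2/sig2) - rho*sig1) + (X+X/G1)*(s2+rho*s1) = 0.
Proof.
  intros. unfold s1, s2, S2v, S1v. unfold Pv in *.
  field. repeat split; auto.
Qed.

Lemma grad0_0 rho sig1 q X G s1 :
  q*G <> 0 -> 1+q <> 0 ->
  q*(1+q)*G*(1-rho^2)*tv sig1 q X G s1 - X*(1-rho^2)*((1+q)*s1+sig1) = 0.
Proof.
  intros. unfold tv.
  assert (G <> 0) by (intro; subst; apply H; ring).
  assert (q <> 0) by (intro; subst; apply H; ring).
  field. repeat split; auto.
Qed.

Lemma Qf_id rho q k X G v0 v1 v2 :
  2*(q*(1+q)*G)*Qf rho q k X G v0 v1 v2 =
  (1-rho^2)*((q*(1+q)*G*v0 - X*(1+q)*v1)^2
     + (q*(1+q)*G*(X+k) - X^2*(1+q)^2)*v1^2)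
  + q*(1+q)*G*(X+k)*(v2+rho*v1)^2.
Proof. unfold Qf, gammaF. field. Qed.

Lemma sq0 x : x^2 = 0 -> x = 0.
Proof. intro. nra. Qed.

Lemma Qf_pd rho q k X G v0 v1 v2 :
  -1 < rho < 1 -> 0 < q*(1+q)*G -> 0 < X + k ->
  0 < q*(1+q)*G*(X+k) - X^2*(1+q)^2 ->
  0 <= Qf rho q k X G v0 v1 v2 /\
  (Qf rho q k X G v0 v1 v2 = 0 -> v0 = 0 /\ v1 = 0 /\ v2 = 0).
Proof.
  intros Hr HA HK HE.
  pose proof (Qf_id rho q k X G v0 v1 v2) as Hid.
  assert (HD : 0 < 1 - rho^2) by nra.
  set (A := q*(1+q)*G) in *.
  set (E := A*(X+k) - X^2*(1+q)^2) in *.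
  set (Q := Qf rho q k X G v0 v1 v2) in *.
  set (w := A*v0 - X*(1+q)*v1) in *.
  assert (H1 : 0 <= (1-rho^2)*(w^2 + E*v1^2)).
  { apply Rmult_le_pos; [lra|].
    pose proof (pow2_ge_0 w). pose proof (pow2_ge_0 v1).
    assert (0 <= E*v1^2) by (apply Rmult_le_pos; lra). lra. }
  assert (H2 : 0 <= A*(X+k)*(v2+rho*v1)^2).
  { apply Rmult_le_pos; [|apply pow2_ge_0]. apply Rmult_le_pos; lra. }
  split.
  - nra.
  - intro HQ. rewrite HQ in Hid.
    assert (Hv1 : v1 = 0).
    { assert (HE2: E*v1^2 = 0) by nra.
      apply Rmult_integral in HE2. destruct HE2 as [h|h]; [lra|].
      apply sq0 in h; auto. }
    subst v1.
    assert (Hw2 : (1-rho^2)*w^2 = 0).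
    { pose proof (pow2_ge_0 w).
      assert (0 <= (1-rho^2)*w^2) by (apply Rmult_le_pos; lra).
      replace (E*0^2) with 0 in H1, Hid by ring. lra. }
    assert (Hw : w = 0).
    { apply Rmult_integral in Hw2. destruct Hw2 as [h|h]; [lra|]. apply sq0; auto. }
    pose proof Hw as Hw0. unfold w in Hw0.
    assert (Hv0 : v0 = 0).
    { assert (A*v0 = 0) by lra. apply Rmult_integral in H. destruct H; lra. }
    split; auto. split; auto.
    assert (HAk : 0 < A*(X+k)) by (apply Rmult_lt_0_compat; lra).
    assert (Hz : A*(X+k)*(v2 + rho*0)^2 = 0).
    { replace (E*0^2) with 0 in Hid by ring. rewrite Hw in Hid. lra. }
    apply Rmult_integral in Hz. destruct Hz as [h|h]; [lra|].
    apply sq0 in h. lra.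
Qed.

Lemma objG_Ft rho mu1 mu2 sig1 sig2 p delta X G k m s1 s2 :
  sig2 <> 0 -> 1 - rho^2 <> 0 -> s1 + sig1 <> 0 ->
  - alphaF rho mu1 mu2 sig1 sig2 p delta m s1 s2 * G
  - (m + betaF rho mu1 mu2 sig1 sig2 p m s1 s2) * X + sgnR p
  + gammaF rho s1 s2 * k
  = Ft rho mu1 mu2 sig1 sig2 (qof p) delta (sgnR p) k X G
       (theta1 rho mu1 mu2 sig1 sig2 m s1 s2) s1 s2.
Proof.
  intros H1 H2 H3.
  unfold alphaF, betaF, Ft, theta2. cbv zeta.
  remember (theta1 rho mu1 mu2 sig1 sig2 m s1 s2) as t eqn:Ht.
  assert (Hm : m = Mf rho mu1 mu2 sig1 sig2 t s1 s2)
    by (rewrite Ht; symmetry; apply Mf_theta1; auto).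
  clear Ht. subst m. ring.
Qed.

Lemma onepq_pos p : p < 1 -> 0 < 1 + qof p.
Proof. intros. unfold qof. replace (1 + p/(1-p)) with (/(1-p)) by (field; lra).
  apply Rinv_0_lt_compat. lra. Qed.

Lemma gamma_zero rho s1 s2 : -1 < rho < 1 -> gammaF rho s1 s2 = 0 -> s1 = 0 /\ s2 = 0.
Proof.
  intros Hr H. unfold gammaF in H.
  assert (HD : 0 < 1 - rho^2) by nra.
  assert (Hid : (s2 + rho*s1)^2 + (1-rho^2)*s1^2 = 0) by nra.
  pose proof (pow2_ge_0 (s2+rho*s1)). pose proof (pow2_ge_0 s1).
  assert (0 <= (1-rho^2)*s1^2) by (apply Rmult_le_pos; lra).
  assert (Hs1 : s1 = 0).
  { apply sq0. assert ((1-rho^2)*s1^2 = 0) by lra.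
    apply Rmult_integral in H3. destruct H3; lra. }
  subst. split; auto. apply sq0. replace s2 with (s2 + rho*0) by ring. lra.
Qed.

Lemma s1v_shift sig1 q X G G1 :
  Pv q X G G1 <> 0 ->
  G1 * S1v sig1 q X G G1 + sig1 = sig1 * (q*(G - X*G1)) / Pv q X G G1.
Proof. intros. unfold S1v. unfold Pv in *. field. auto. Qed.

Lemma Ft_shift rho mu1 mu2 sig1 sig2 q delta sg k X G t s1 s2 t' s1' s2' :
  Ft rho mu1 mu2 sig1 sig2 q delta sg k X G t' s1' s2' =
  Ft rho mu1 mu2 sig1 sig2 q delta sg k X G (t+(t'-t)) (s1+(s1'-s1)) (s2+(s2'-s2)).
Proof. f_equal; ring. Qed.

Lemma objG_int rho mu1 mu2 sig1 sig2 p delta X G G1 m s1 s2 :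
  sig2 <> 0 -> 1 - rho^2 <> 0 -> s1 + sig1 <> 0 -> G1 <> 0 ->
  objG rho mu1 mu2 sig1 sig2 p delta X G G1 m s1 s2 =
  Finite (Ft rho mu1 mu2 sig1 sig2 (qof p) delta (sgnR p) (X/G1) X G
       (theta1 rho mu1 mu2 sig1 sig2 m s1 s2) s1 s2).
Proof.
  intros. rewrite <- objG_Ft by auto. unfold objG. cbv zeta.
  destruct (Req_EM_T G1 0); [contradiction|]. f_equal.
Qed.

Lemma objG_end0 rho mu1 mu2 sig1 sig2 p delta X G G1 m s1 s2 :
  sig2 <> 0 -> 1 - rho^2 <> 0 -> s1 + sig1 <> 0 -> G1 = 0 -> gammaF rho s1 s2 = 0 ->
  objG rho mu1 mu2 sig1 sig2 p delta X G G1 m s1 s2 =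
  Finite (Ft rho mu1 mu2 sig1 sig2 (qof p) delta (sgnR p) 0 X G
       (theta1 rho mu1 mu2 sig1 sig2 m s1 s2) s1 s2).
Proof.
  intros ? ? ? ? Hg. rewrite <- objG_Ft by auto. unfold objG. cbv zeta.
  destruct (Req_EM_T G1 0); [|contradiction].
  destruct (Req_EM_T (gammaF rho s1 s2) 0); [|contradiction]. f_equal.
  rewrite Hg. ring.
Qed.

Lemma objG_endinf rho mu1 mu2 sig1 sig2 p delta X G G1 m s1 s2 :
  G1 = 0 -> gammaF rho s1 s2 <> 0 ->
  objG rho mu1 mu2 sig1 sig2 p delta X G G1 m s1 s2 = p_infty.
Proof.
  intros. unfold objG. cbv zeta.
  destruct (Req_EM_T G1 0); [|contradiction].
  destruct (Req_EM_T (gammaF rho s1 s2) 0); [contradiction|]. auto.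
Qed.

Lemma pointwise rho mu1 mu2 sig1 sig2 p delta X G G1 :
  -1 < rho < 1 -> 0 < sig1 -> 0 < sig2 -> p < 1 -> p <> 0 ->
  0 < qof p * G -> 0 < Pv (qof p) X G G1 -> 0 < G1 + 1 ->
  0 < qof p * (G - X*G1) ->
  (G1 = 0 \/ 0 < G1 / X) ->
  let q := qof p in
  let s1 := G1 * S1v sig1 q X G G1 in
  let s2 := G1 * S2v rho mu2 sig1 sig2 q X G G1 in
  let t := tv sig1 q X G s1 in
  let m := Mf rho mu1 mu2 sig1 sig2 t s1 s2 in
  s1 <> - sig1 /\
  exists v, objG rho mu1 mu2 sig1 sig2 p delta X G G1 m s1 s2 = Finite v /\
  forall m' s1' s2', s1' <> - sig1 ->
     objG rho mu1 mu2 sig1 sig2 p delta X G G1 m' s1' s2' = p_infty \/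
     exists w, objG rho mu1 mu2 sig1 sig2 p delta X G G1 m' s1' s2' = Finite w
       /\ v <= w /\ (w = v -> m' = m /\ s1' = s1 /\ s2' = s2).
Proof.
  intros Hr Hs1 Hs2 Hp Hp0 HqG HP HG11 HqGX HG1 q s1 s2 t m.
  assert (H1q : 0 < 1 + q) by (apply onepq_pos; auto).
  fold q in HqG, HP, HqGX.
  assert (HD : 0 < 1 - rho^2) by nra.
  assert (HDn : 1 - rho^2 <> 0) by lra.
  assert (Hsig2n : sig2 <> 0) by lra.
  assert (HA : 0 < q*(1+q)*G) by (replace (q*(1+q)*G) with ((1+q)*(q*G)) by ring;
     apply Rmult_lt_0_compat; auto).
  assert (Hs1pos : 0 < s1 + sig1).
  { unfold s1. rewrite s1v_shift by lra. unfold Rdiv.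
    apply Rmult_lt_0_compat; [apply Rmult_lt_0_compat; auto|].
    apply Rinv_0_lt_compat; auto. }
  assert (Hs1n : s1 + sig1 <> 0) by lra.
  assert (Htm : theta1 rho mu1 mu2 sig1 sig2 m s1 s2 = t) by
    (unfold m; apply theta1_Mf; auto).
  split; [lra|].
  destruct (Req_EM_T G1 0) as [HG0 | HG0].
  -
    assert (Hs10 : s1 = 0) by (unfold s1; rewrite HG0; ring).
    assert (Hs20 : s2 = 0) by (unfold s2; rewrite HG0; ring).
    assert (Hg0' : q*(1+q)*G*(1-rho^2)*t - X*(1-rho^2)*((1+q)*s1+sig1) = 0)
      by (apply grad0_0; lra).
    assert (Hmd : m = Mf rho mu1 mu2 sig1 sig2 t s1 s2) by reflexivity.
    clearbody m t s1 s2. subst s1 s2.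
    assert (Hg0 : gammaF rho 0 0 = 0) by (unfold gammaF; ring).
    exists (Ft rho mu1 mu2 sig1 sig2 q delta (sgnR p) 0 X G t 0 0). split.
    + rewrite objG_end0 by auto. rewrite Htm. reflexivity.
    + intros m' s1' s2' Hs1'.
      destruct (Req_EM_T (gammaF rho s1' s2') 0) as [Hg|Hg];
        [|left; apply objG_endinf; auto].
      right. destruct (gamma_zero rho s1' s2' Hr Hg) as [Ha Hb]. subst s1' s2'.
      rewrite objG_end0 by auto.
      remember (theta1 rho mu1 mu2 sig1 sig2 m' 0 0) as t' eqn:Ht'.
      eexists. split; [reflexivity|]. fold q.
      pose proof (Ft_shift rho mu1 mu2 sig1 sig2 q delta (sgnR p) 0 X G t 0 0 t' 0 0) as Hsh.
      pose proof (Ft_expand rho mu1 mu2 sig1 sig2 q delta (sgnR p) 0 X G t 0 0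
                     (t'-t) (0-0) (0-0) Hsig2n HDn) as E.
      assert (HQ : Qf rho q 0 X G (t'-t) (0-0) (0-0) = q*(1+q)*G*(1-rho^2)/2*(t'-t)^2).
      { unfold Qf, gammaF. ring. }
      rewrite <- Hsh in E. rewrite HQ in E. rewrite Hg0' in E.
      assert (Hc : 0 < q*(1+q)*G*(1-rho^2)/2).
      { unfold Rdiv; apply Rmult_lt_0_compat; [apply Rmult_lt_0_compat; lra | lra]. }
      pose proof (pow2_ge_0 (t'-t)).
      assert (0 <= q*(1+q)*G*(1-rho^2)/2*(t'-t)^2) by (apply Rmult_le_pos; lra).
      split; [lra|]. intro Heq.
      assert (Hz : q*(1+q)*G*(1-rho^2)/2*(t'-t)^2 = 0) by lra.
      apply Rmult_integral in Hz. destruct Hz as [Hz|Hz].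
      { exfalso. lra. }
      apply sq0 in Hz. assert (Htt : t' = t) by lra.
      split; [|split; lra].
      rewrite <- (Mf_theta1 rho mu1 mu2 sig1 sig2 m' 0 0) by (auto; lra).
      rewrite <- Ht', Htt, Hmd. reflexivity.
  -
    destruct HG1 as [HG1|HG1]; [contradiction|].
    assert (HX : X <> 0).
    { intro HX0. rewrite HX0 in HG1. unfold Rdiv in HG1. rewrite Rinv_0 in HG1. lra. }
    assert (Hk : 0 < X / G1).
    { replace (X/G1) with (/(G1/X)) by (field; auto). apply Rinv_0_lt_compat; auto. }
    assert (HK : 0 < X + X/G1).
    { replace (X + X/G1) with ((X/G1)*(G1+1)) by (field; auto).
      apply Rmult_lt_0_compat; auto. }
    assert (HE : 0 < q*(1+q)*G*(X+X/G1) - X^2*(1+q)^2).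
    { replace (q*(1+q)*G*(X+X/G1) - X^2*(1+q)^2) with ((1+q)*(X/G1)*Pv q X G G1)
        by (unfold Pv; field; auto).
      apply Rmult_lt_0_compat; auto. apply Rmult_lt_0_compat; auto. }
    assert (HqGn : q*G <> 0) by lra.
    assert (H1qn : 1+q <> 0) by lra.
    assert (HPn : Pv q X G G1 <> 0) by lra.
    assert (HG11n : G1+1 <> 0) by lra.
    assert (Hg0' : q*(1+q)*G*(1-rho^2)*t - X*(1-rho^2)*((1+q)*s1+sig1) = 0)
      by (apply grad0_0; lra).
    assert (Hg1' : - X*(1-rho^2)*(1+q)*t - X*((1+q)*rho*(mu2/sig2) - sig1)
                   + (X+X/G1)*(s1+rho*s2) = 0)
      by (apply grad1_0; auto).
    assert (Hg2' : - X*((1+q)*(mu2/sig2) - rho*sig1) + (X+X/G1)*(s2+rho*s1) = 0)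
      by (apply grad2_0; auto).
    assert (Hmd : m = Mf rho mu1 mu2 sig1 sig2 t s1 s2) by reflexivity.
    clearbody m t s1 s2.
    exists (Ft rho mu1 mu2 sig1 sig2 q delta (sgnR p) (X/G1) X G t s1 s2). split.
    + rewrite objG_int by auto. rewrite Htm. reflexivity.
    + intros m' s1' s2' Hs1'.
      right.
      assert (Hn : s1' + sig1 <> 0) by lra.
      rewrite objG_int by auto.
      remember (theta1 rho mu1 mu2 sig1 sig2 m' s1' s2') as t' eqn:Ht'.
      eexists. split; [reflexivity|]. fold q.
      pose proof (Ft_shift rho mu1 mu2 sig1 sig2 q delta (sgnR p) (X/G1) X G t s1 s2 t' s1' s2') as Hsh.
      pose proof (Ft_expand rho mu1 mu2 sig1 sig2 q delta (sgnR p) (X/G1) X G t s1 s2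
                     (t'-t) (s1'-s1) (s2'-s2) Hsig2n HDn) as E.
      rewrite <- Hsh in E. rewrite Hg0', Hg1', Hg2' in E.
      destruct (Qf_pd rho q (X/G1) X G (t'-t) (s1'-s1) (s2'-s2) Hr HA HK HE) as [Q1 Q2].
      split; [lra|]. intro Heq.
      destruct Q2 as [Z0 [Z1 Z2]]; [lra|].
      split; [|split; lra].
      rewrite <- (Mf_theta1 rho mu1 mu2 sig1 sig2 m' s1' s2') by auto.
      rewrite <- Ht', Hmd. f_equal; lra.
Qed.

Definition clamp (a b x : R) : R :=
  if Rle_dec x a then a else if Rle_dec b x then b else x.

Lemma clamp_in a b x : a <= b -> a <= clamp a b x <= b.
Proof. intros. unfold clamp. repeat destruct Rle_dec; lra. Qed.

Lemma clamp_id a b x : a <= x <= b -> clamp a b x = x.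
Proof. intros. unfold clamp. repeat destruct Rle_dec; lra. Qed.

Lemma clamp_lip a b x y : a <= b -> Rabs (clamp a b x - clamp a b y) <= Rabs (x - y).
Proof. intros. unfold clamp. repeat destruct Rle_dec; unfold Rabs; repeat destruct Rcase_abs; lra. Qed.

Lemma cont_clamp a b f : a <= b ->
  (forall x, a <= x <= b -> continuous_within (fun y => a <= y <= b) f x) ->
  forall c, continuity_pt (fun x => f (clamp a b x)) c.
Proof.
  intros Hab Hc c. unfold continuity_pt, continue_in, limit1_in, limit_in. simpl.
  unfold R_dist. intros eps Heps.
  destruct (Hc (clamp a b c) (clamp_in a b c Hab) eps Heps) as [d [Hd Hf]].
  exists d. split; [lra|]. intros x [_ Hx].
  apply Hf. apply clamp_in; auto.
  eapply Rle_lt_trans; [apply clamp_lip; auto| auto].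
Qed.

Lemma deriv_cont (D : R -> Prop) f x l :
  has_deriv_within D f x l -> continuous_within D f x.
Proof.
  intros H eps Heps.
  destruct (H 1 Rlt_0_1) as [d [Hd Hf]].
  exists (Rmin d (eps / (Rabs l + 1))). split.
  { apply Rmin_glb_lt; auto. apply Rdiv_lt_0_compat; auto.
    pose proof (Rabs_pos l); lra. }
  intros y Dy Hy.
  destruct (Req_dec y x) as [->|Hne].
  { replace (f x - f x) with 0 by ring. rewrite Rabs_R0. auto. }
  assert (Hpos : 0 < Rabs (y - x)) by (apply Rabs_pos_lt; lra).
  assert (Hyd : Rabs (y - x) < d) by (eapply Rlt_le_trans; [apply Hy| apply Rmin_l]).
  assert (Hye : Rabs (y - x) < eps / (Rabs l + 1))
    by (eapply Rlt_le_trans; [apply Hy| apply Rmin_r]).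
  specialize (Hf y Dy (conj Hpos Hyd)).
  assert (Hyx : y - x <> 0) by lra.
  replace (f y - f x) with (((f y - f x)/(y-x) - l)*(y-x) + l*(y-x)) by (field; auto).
  eapply Rle_lt_trans; [apply Rabs_triang|].
  rewrite !Rabs_mult.
  assert (Hl : 0 <= Rabs l) by apply Rabs_pos.
  assert (Rabs ((f y - f x) / (y - x) - l) * Rabs (y - x) <= 1 * Rabs (y-x)).
  { apply Rmult_le_compat_r; [apply Rabs_pos| lra]. }
  assert (Hq : (Rabs l + 1) * Rabs (y - x) < eps).
  { apply (Rmult_lt_compat_l (Rabs l + 1)) in Hye; [|lra].
    replace ((Rabs l + 1) * (eps / (Rabs l + 1))) with eps in Hye by (field; lra). auto. }
  nra.
Qed.

Lemma lip_cont (D : R -> Prop) f x : lipschitz_on D f -> D x -> continuous_within D f x.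
Proof.
  intros [L HL] Dx eps Heps.
  exists (eps / (Rabs L + 1)). split.
  { apply Rdiv_lt_0_compat; auto. pose proof (Rabs_pos L); lra. }
  intros y Dy Hy.
  eapply Rle_lt_trans; [apply (HL y x Dy Dx)|].
  assert (L * Rabs (y - x) <= Rabs L * Rabs (y-x)).
  { apply Rmult_le_compat_r; [apply Rabs_pos| apply Rle_abs]. }
  assert (Hq : (Rabs L + 1) * Rabs (y - x) < eps).
  { apply (Rmult_lt_compat_l (Rabs L + 1)) in Hy; [|pose proof (Rabs_pos L); lra].
    replace ((Rabs L + 1) * (eps / (Rabs L + 1))) with eps in Hy
      by (field; pose proof (Rabs_pos L); lra). auto. }
  pose proof (Rabs_pos (y-x)). nra.
Qed.

Lemma cont_bounded a b f : a <= b ->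
  (forall x, a <= x <= b -> continuous_within (fun y => a <= y <= b) f x) ->
  exists M, forall x, a <= x <= b -> Rabs (f x) <= M.
Proof.
  intros Hab Hc.
  pose proof (cont_clamp a b f Hab Hc) as Hcc.
  destruct (continuity_ab_maj _ a b Hab (fun c _ => Hcc c)) as [x1 [H1 _]].
  destruct (continuity_ab_min _ a b Hab (fun c _ => Hcc c)) as [x2 [H2 _]].
  exists (Rabs (f (clamp a b x1)) + Rabs (f (clamp a b x2))).
  intros x Hx. specialize (H1 x Hx). specialize (H2 x Hx).
  rewrite (clamp_id a b x Hx) in H1, H2.
  unfold Rabs; repeat destruct Rcase_abs; lra.
Qed.

Lemma lip_pos_lb a b f : a <= b -> lipschitz_on (fun y => a <= y <= b) f ->
  (forall x, a <= x <= b -> 0 < f x) ->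
  exists c, 0 < c /\ forall x, a <= x <= b -> c <= f x.
Proof.
  intros Hab Hl Hp.
  assert (Hc : forall x, a <= x <= b -> continuous_within (fun y => a <= y <= b) f x)
    by (intros; apply lip_cont; auto).
  pose proof (cont_clamp a b f Hab Hc) as Hcc.
  destruct (continuity_ab_min _ a b Hab (fun c _ => Hcc c)) as [x2 [H2 Hx2]].
  exists (f (clamp a b x2)). split.
  - apply Hp. apply clamp_in; auto.
  - intros x Hx. specialize (H2 x Hx). rewrite (clamp_id a b x) in H2 by auto. auto.
Qed.

Lemma deriv_interior a b f x l :
  a < x < b -> has_deriv_within (fun y => a <= y <= b) f x l ->
  is_derive (fun z => f (clamp a b z)) x l.
Proof.
  intros Hx H. apply is_derive_Reals. intros eps Heps.
  destruct (H eps Heps) as [d [Hd Hf]].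
  assert (Hdp : 0 < Rmin d (Rmin (x - a) (b - x))).
  { repeat apply Rmin_glb_lt; lra. }
  exists (mkposreal _ Hdp). simpl. intros h Hh Hhd.
  assert (H1 : Rabs h < d) by (eapply Rlt_le_trans; [apply Hhd| apply Rmin_l]).
  assert (H2 : Rabs h < Rmin (x - a) (b - x)) by (eapply Rlt_le_trans; [apply Hhd| apply Rmin_r]).
  assert (H3 : Rabs h < x - a) by (eapply Rlt_le_trans; [apply H2| apply Rmin_l]).
  assert (H4 : Rabs h < b - x) by (eapply Rlt_le_trans; [apply H2| apply Rmin_r]).
  assert (Hh' : -(x-a) < h < b - x) by (split; [apply Rabs_lt_between in H3 | apply Rabs_lt_between in H4]; lra).
  rewrite (clamp_id a b (x+h)) by lra. rewrite (clamp_id a b x) by lra.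
  specialize (Hf (x+h)).
  replace (x + h - x) with h in Hf by ring. apply Hf; [lra|].
  split; auto. apply Rabs_pos_lt; auto.
Qed.

Lemma mvt_lip a b f f' M : a <= b ->
  (forall x, a <= x <= b -> has_deriv_within (fun y => a <= y <= b) f x (f' x)) ->
  (forall x, a <= x <= b -> Rabs (f' x) <= M) ->
  lipschitz_on (fun y => a <= y <= b) f.
Proof.
  intros Hab Hd HM. exists M. intros x y Hx Hy.
  set (F := fun z => f (clamp a b z)).
  assert (Hc : forall c, continuity_pt F c).
  { apply cont_clamp; auto. intros z Hz. eapply deriv_cont. apply Hd; auto. }
  assert (Hmin : a <= Rmin y x) by (apply Rmin_glb; lra).
  assert (Hmax : Rmax y x <= b) by (apply Rmax_lub; lra).
  destruct (MVT_gen F y x f') as [c [Hc1 Hc2]].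
  - intros z Hz. apply deriv_interior; [lra|]. apply Hd. lra.
  - intros; apply Hc.
  - unfold F in Hc2. rewrite (clamp_id a b x Hx), (clamp_id a b y Hy) in Hc2.
    rewrite Hc2. rewrite Rabs_mult.
    assert (Hcab : a <= c <= b) by lra.
    apply Rmult_le_compat_r; [apply Rabs_pos| apply HM; auto].
Qed.

Definition LB (D : R -> Prop) (f : R -> R) : Prop :=
  lipschitz_on D f /\ exists M, forall x, D x -> Rabs (f x) <= M.

Lemma LB_pos D f : LB D f ->
  exists L M, 0 <= L /\ 0 <= M /\
   (forall x y, D x -> D y -> Rabs (f x - f y) <= L * Rabs (x - y)) /\
   (forall x, D x -> Rabs (f x) <= M).
Proof.
  intros [[L HL] [M HM]]. exists (Rmax L 0), (Rmax M 0).
  split; [apply Rmax_r|]. split; [apply Rmax_r|]. split.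
  - intros x y Hx Hy. eapply Rle_trans; [apply HL; auto|].
    apply Rmult_le_compat_r; [apply Rabs_pos| apply Rmax_l].
  - intros x Hx. eapply Rle_trans; [apply HM; auto| apply Rmax_l].
Qed.

Lemma LB_ext D f h : (forall x, D x -> f x = h x) -> LB D f -> LB D h.
Proof.
  intros He [[L HL] [M HM]]. split.
  - exists L. intros x y Hx Hy. rewrite <- !He by auto. auto.
  - exists M. intros x Hx. rewrite <- He by auto. auto.
Qed.

Lemma LB_sub (D D' : R -> Prop) f : (forall x, D' x -> D x) -> LB D f -> LB D' f.
Proof.
  intros Hs [[L HL] [M HM]]. split.
  - exists L. intros. apply HL; auto.
  - exists M. intros. apply HM; auto.
Qed.

Lemma LB_const D c : LB D (fun _ => c).
Proof.
  split.
  - exists 0. intros. replace (c - c) with 0 by ring. rewrite Rabs_R0. rewrite Rmult_0_l. lra.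
  - exists (Rabs c). intros. lra.
Qed.

Lemma LB_plus D f h : LB D f -> LB D h -> LB D (fun x => f x + h x).
Proof.
  intros Hf Hh. destruct (LB_pos D f Hf) as [L1 [M1 [_ [_ [A1 B1]]]]].
  destruct (LB_pos D h Hh) as [L2 [M2 [_ [_ [A2 B2]]]]]. split.
  - exists (L1 + L2). intros x y Hx Hy.
    replace (f x + h x - (f y + h y)) with ((f x - f y) + (h x - h y)) by ring.
    eapply Rle_trans; [apply Rabs_triang|].
    specialize (A1 x y Hx Hy). specialize (A2 x y Hx Hy). lra.
  - exists (M1 + M2). intros x Hx. eapply Rle_trans; [apply Rabs_triang|].
    specialize (B1 x Hx). specialize (B2 x Hx). lra.
Qed.

Lemma LB_mult D f h : LB D f -> LB D h -> LB D (fun x => f x * h x).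
Proof.
  intros Hf Hh. destruct (LB_pos D f Hf) as [L1 [M1 [HL1 [HM1 [A1 B1]]]]].
  destruct (LB_pos D h Hh) as [L2 [M2 [HL2 [HM2 [A2 B2]]]]]. split.
  - exists (M1 * L2 + M2 * L1). intros x y Hx Hy.
    replace (f x * h x - f y * h y) with (f x * (h x - h y) + h y * (f x - f y)) by ring.
    eapply Rle_trans; [apply Rabs_triang|]. rewrite !Rabs_mult.
    specialize (A1 x y Hx Hy). specialize (A2 x y Hx Hy).
    specialize (B1 x Hx). specialize (B2 y Hy).
    pose proof (Rabs_pos (f x)). pose proof (Rabs_pos (h y)).
    pose proof (Rabs_pos (h x - h y)). pose proof (Rabs_pos (f x - f y)).
    pose proof (Rabs_pos (x - y)).
    assert (Rabs (f x) * Rabs (h x - h y) <= M1 * (L2 * Rabs (x - y))).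
    { apply Rmult_le_compat; auto. }
    assert (Rabs (h y) * Rabs (f x - f y) <= M2 * (L1 * Rabs (x - y))).
    { apply Rmult_le_compat; auto. }
    nra.
  - exists (M1 * M2). intros x Hx. rewrite Rabs_mult.
    apply Rmult_le_compat; auto using Rabs_pos.
Qed.

Lemma LB_scal D c f : LB D f -> LB D (fun x => c * f x).
Proof. intros. apply (LB_mult D (fun _ => c) f); auto. apply LB_const. Qed.

Lemma LB_minus D f h : LB D f -> LB D h -> LB D (fun x => f x - h x).
Proof.
  intros. apply (LB_ext D (fun x => f x + (-1) * h x)); [intros; ring|].
  apply LB_plus; auto. apply LB_scal; auto.
Qed.

Lemma LB_inv D h c : 0 < c -> (forall x, D x -> c <= Rabs (h x)) -> LB D h ->
  LB D (fun x => / h x).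
Proof.
  intros Hc Hlow Hh. destruct (LB_pos D h Hh) as [L [M [HL [HM [A B]]]]]. split.
  - exists (L / (c*c)). intros x y Hx Hy.
    assert (Hx0 : h x <> 0) by (intro E; specialize (Hlow x Hx); rewrite E, Rabs_R0 in Hlow; lra).
    assert (Hy0 : h y <> 0) by (intro E; specialize (Hlow y Hy); rewrite E, Rabs_R0 in Hlow; lra).
    replace (/ h x - / h y) with ((h y - h x) / (h x * h y)) by (field; auto).
    unfold Rdiv. rewrite Rabs_mult, Rabs_Rinv, Rabs_mult by (apply Rmult_integral_contrapositive; auto).
    rewrite <- Rabs_Ropp. replace (- (h y - h x)) with (h x - h y) by ring.
    specialize (A x y Hx Hy). pose proof (Hlow x Hx). pose proof (Hlow y Hy).
    assert (Hcc : c * c <= Rabs (h x) * Rabs (h y)) by (apply Rmult_le_compat; lra).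
    assert (Hi : / (Rabs (h x) * Rabs (h y)) <= / (c*c)).
    { apply Rinv_le_contravar; auto. nra. }
    pose proof (Rabs_pos (h x - h y)). pose proof (Rabs_pos (x - y)).
    assert (0 <= / (Rabs (h x) * Rabs (h y))).
    { left. apply Rinv_0_lt_compat. nra. }
    replace (L * / (c * c) * Rabs (x - y)) with ((L * Rabs (x - y)) * / (c*c)) by ring.
    apply Rmult_le_compat; auto.
  - exists (/ c). intros x Hx. rewrite Rabs_Rinv.
    + apply Rinv_le_contravar; auto.
    + intro E. specialize (Hlow x Hx). rewrite E, Rabs_R0 in Hlow; lra.
Qed.

Lemma LB_div D f h c : 0 < c -> (forall x, D x -> c <= Rabs (h x)) -> LB D f -> LB D h ->
  LB D (fun x => f x / h x).
Proof. intros. apply (LB_mult D f (fun x => / h x)); auto. eapply LB_inv; eauto. Qed.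

Lemma lip_LB a b f : a <= b -> lipschitz_on (fun y => a <= y <= b) f ->
  LB (fun y => a <= y <= b) f.
Proof.
  intros Hab Hl. split; auto. destruct Hl as [L HL].
  exists (Rabs (f a) + Rabs L * (b - a)). intros x Hx.
  specialize (HL x a Hx ltac:(lra)).
  replace (f x) with (f a + (f x - f a)) by ring.
  eapply Rle_trans; [apply Rabs_triang|].
  assert (L * Rabs (x - a) <= Rabs L * (b - a)).
  { eapply Rle_trans; [apply Rmult_le_compat_r; [apply Rabs_pos| apply Rle_abs]|].
    apply Rmult_le_compat_l; [apply Rabs_pos|]. rewrite Rabs_right by lra. lra. }
  lra.
Qed.

Lemma LB_id a b : LB (fun y => a <= y <= b) (fun x => x).
Proof.
  split.
  - exists 1. intros. lra.
  - exists (Rabs a + Rabs b). intros x Hx. unfold Rabs; repeat destruct Rcase_abs; lra.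
Qed.

Lemma LB_opp D f : LB D f -> LB D (fun x => - f x).
Proof. intros. apply (LB_ext D (fun x => (-1) * f x)); [intros; ring|]. apply LB_scal; auto. Qed.

Lemma LB_pow2 D f : LB D f -> LB D (fun x => f x ^ 2).
Proof. intros. apply (LB_ext D (fun x => f x * f x)); [intros; ring|]. apply LB_mult; auto. Qed.

Lemma LB_divc D f c : LB D f -> LB D (fun x => f x / c).
Proof. intros. apply (LB_ext D (fun x => /c * f x)); [intros; unfold Rdiv; ring|]. apply LB_scal; auto. Qed.

Ltac lb := repeat match goal with
 | |- LB _ (fun _ => ?c) => apply LB_const
 | |- LB _ (fun x => x) => apply LB_id
 | |- LB ?D (fun x => @?a x + @?b x) => apply (LB_plus D a b)
 | |- LB ?D (fun x => @?a x - @?b x) => apply (LB_minus D a b)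
 | |- LB ?D (fun x => @?a x * @?b x) => apply (LB_mult D a b)
 | |- LB ?D (fun x => - @?a x) => apply (LB_opp D a)
 | |- LB ?D (fun x => @?a x ^ 2) => apply (LB_pow2 D a)
 | |- LB ?D (fun x => @?a x / ?c) => apply (LB_divc D a c)
 | |- _ => assumption
 end.

Lemma part1_pt rho mu1 mu2 sig1 sig2 p delta X G G1 :
  -1 < rho < 1 -> 0 < sig1 -> 0 < sig2 -> p < 1 -> p <> 0 ->
  0 < qof p * G -> 0 < Pv (qof p) X G G1 -> 0 < G1 + 1 ->
  0 < qof p * (G - X*G1) ->
  (G1 = 0 \/ 0 < G1 / X) ->
  inf_is_zero sig1 (objG rho mu1 mu2 sig1 sig2 p delta X G G1) ->
  let q := qof p in
  let s1 := G1 * S1v sig1 q X G G1 in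
  let s2 := G1 * S2v rho mu2 sig1 sig2 q X G G1 in
  let t := tv sig1 q X G s1 in
  let m := Mf rho mu1 mu2 sig1 sig2 t s1 s2 in
  s1 <> - sig1 /\
  objG rho mu1 mu2 sig1 sig2 p delta X G G1 m s1 s2 = Finite 0 /\
  (forall m' s1' s2', s1' <> - sig1 ->
     objG rho mu1 mu2 sig1 sig2 p delta X G G1 m' s1' s2' = Finite 0 ->
     m' = m /\ s1' = s1 /\ s2' = s2).
Proof.
  intros Hr Hs1 Hs2 Hp Hp0 HqG HP HG11 HqGX HG1 [Hinf1 Hinf2] q s1 s2 t m.
  destruct (pointwise rho mu1 mu2 sig1 sig2 p delta X G G1 Hr Hs1 Hs2 Hp Hp0 HqG HP HG11 HqGX HG1)
    as [Hne [v [Hv Hmin]]].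
  fold q s1 s2 t m in Hne, Hv, Hmin.
  assert (Hv0 : 0 <= v).
  { specialize (Hinf1 m s1 s2 Hne). rewrite Hv in Hinf1. simpl in Hinf1. auto. }
  assert (Hv1 : v <= 0).
  { destruct (Rle_dec v 0) as [|Hn]; auto. exfalso.
    destruct (Hinf2 (v/2) ltac:(lra)) as [m' [s1' [s2' [Hs' Hlt]]]].
    destruct (Hmin m' s1' s2' Hs') as [Hi | [w [Hw [Hvw _]]]].
    - rewrite Hi in Hlt. simpl in Hlt. auto.
    - rewrite Hw in Hlt. simpl in Hlt. lra. }
  assert (v = 0) by lra. subst v.
  split; auto. split; auto.
  intros m' s1' s2' Hs' H0.
  destruct (Hmin m' s1' s2' Hs') as [Hi | [w [Hw [Hvw Heq]]]].
  - rewrite Hi in H0. discriminate.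
  - rewrite Hw in H0. injection H0 as H0. apply Heq. auto.
Qed.

Lemma fermat h x l d : 0 < d -> is_derive h x l ->
  (forall y, x - d < y < x + d -> h x <= h y) -> l = 0.
Proof.
  intros Hd Hder Hmin. apply is_derive_Reals in Hder.
  pose (pr := exist (fun l => derivable_pt_abs h x l) l Hder : derivable_pt h x).
  pose proof (deriv_minimum h (x-d) (x+d) x pr ltac:(lra) ltac:(lra)) as E.
  simpl in E. apply E. intros y H1 H2. apply Hmin. lra.
Qed.

Lemma deriv_int a b f x l :
  a < x < b -> has_deriv_within (fun y => a <= y <= b) f x l -> is_derive f x l.
Proof.
  intros Hx H. apply (is_derive_ext_loc (fun z => f (clamp a b z))).
  - exists (mkposreal (Rmin (x-a) (b-x)) ltac:(apply Rmin_glb_lt; lra)).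
    intros y Hy. simpl in Hy. unfold ball in Hy; simpl in Hy. unfold AbsRing_ball, abs, minus, plus, opp in Hy. simpl in Hy.
    apply Rabs_lt_between in Hy.
    assert (Rmin (x - a) (b - x) <= x - a) by apply Rmin_l.
    assert (Rmin (x - a) (b - x) <= b - x) by apply Rmin_r.
    rewrite clamp_id; auto. lra.
  - apply deriv_interior; auto.
Qed.

Lemma ball_R (x y : R) (e : posreal) : ball x e y <-> Rabs (y - x) < e.
Proof. unfold ball; simpl. unfold AbsRing_ball, abs, minus, plus, opp. simpl. tauto. Qed.

Lemma lim_right a b R : a < b -> lipschitz_on (fun y => a <= y <= b) R ->
  filterlim R (at_right a) (locally (R a)).
Proof.
  intros Hab Hl. apply filterlim_locally. intros eps.
  destruct (lip_cont _ R a Hl ltac:(lra) eps (cond_pos eps)) as [d [Hd Hc]].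
  assert (Hm : 0 < Rmin d (b-a)) by (apply Rmin_glb_lt; lra).
  exists (mkposreal _ Hm).
  intros y Hy Hay. apply ball_R in Hy.
  assert (Hy' : Rabs (y - a) < Rmin d (b-a)) by exact Hy. clear Hy.
  apply ball_R.
  assert (Rmin d (b - a) <= d) by apply Rmin_l.
  assert (Rmin d (b - a) <= b - a) by apply Rmin_r.
  apply Rabs_lt_between in Hy'.
  apply Hc; [lra|]. apply Rabs_lt_between. lra.
Qed.

Lemma lim_left a b R : a < b -> lipschitz_on (fun y => a <= y <= b) R ->
  filterlim R (at_left b) (locally (R b)).
Proof.
  intros Hab Hl. apply filterlim_locally. intros eps.
  destruct (lip_cont _ R b Hl ltac:(lra) eps (cond_pos eps)) as [d [Hd Hc]].
  assert (Hm : 0 < Rmin d (b-a)) by (apply Rmin_glb_lt; lra).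
  exists (mkposreal _ Hm).
  intros y Hy Hay. apply ball_R in Hy.
  assert (Hy' : Rabs (y - b) < Rmin d (b-a)) by exact Hy. clear Hy.
  apply ball_R.
  assert (Rmin d (b - a) <= d) by apply Rmin_l.
  assert (Rmin d (b - a) <= b - a) by apply Rmin_r.
  apply Rabs_lt_between in Hy'.
  apply Hc; [lra|]. apply Rabs_lt_between. lra.
Qed.

Lemma lim_ext_right a b F0 T (L : (R -> Prop) -> Prop) : a < b -> (forall y, a < y < b -> F0 y = T y) ->
  filterlim F0 (at_right a) L -> filterlim T (at_right a) L.
Proof.
  intros Hab He Hl. eapply filterlim_ext_loc; [|apply Hl].
  assert (Hm : 0 < b - a) by lra.
  exists (mkposreal _ Hm). intros y Hy Hay. apply ball_R in Hy.
  assert (Hy' : Rabs (y - a) < b - a) by exact Hy.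
  apply Rabs_lt_between in Hy'. apply He. lra.
Qed.

Lemma lim_ext_left a b F0 T (L : (R -> Prop) -> Prop) : a < b -> (forall y, a < y < b -> F0 y = T y) ->
  filterlim F0 (at_left b) L -> filterlim T (at_left b) L.
Proof.
  intros Hab He Hl. eapply filterlim_ext_loc; [|apply Hl].
  assert (Hm : 0 < b - a) by lra.
  exists (mkposreal _ Hm). intros y Hy Hay. apply ball_R in Hy.
  assert (Hy' : Rabs (y - b) < b - a) by exact Hy.
  apply Rabs_lt_between in Hy'. apply He. lra.
Qed.

Theorem corollary4p2
  (rho mu1 mu2 sig1 sig2 lamU lamL p delta : R)
  (Hrho : -1 < rho < 1)
  (Hmu1 : 0 < mu1) (Hmu2 : 0 < mu2) (Hsig1 : 0 < sig1) (Hsig2 : 0 < sig2)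
  (HlamU : 0 < lamU) (HlamL : 0 < lamL < 1)
  (Hp : p < 1) (Hp0 : p <> 0)
  (Hdelta : 0 < delta)
  (Hstand1 : delta > qof p / (2 * (1 - rho ^ 2)) *
      ((mu1 / sig1) ^ 2 + (mu2 / sig2) ^ 2 - 2 * rho * (mu1 * mu2) / (sig1 * sig2)))
  (Hstand2 : mu1 <> rho * mu2 * sig1 / sig2)
  (Hstand3 : mu2 <> rho * sig1 * sig2 / (1 + qof p))
  (xl xu : R) (g g1 g2 : R -> R)
  (Hxlu : xl < xu)
  (HC2 : C2_on xl xu g g1 g2)
  (* (G1) *)
  (HG1a : mu1 > rho * mu2 * sig1 / sig2 -> 0 < xl)
  (HG1b : mu1 < rho * mu2 * sig1 / sig2 -> xu < 0)
  (* (G2) *)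
  (HG2 : forall x, xl <= x <= xu ->
     inf_is_zero sig1 (objG rho mu1 mu2 sig1 sig2 p delta x (g x) (g1 x)))
  (* (G3) *)
  (HG3a : g1 xl = 0) (HG3b : g1 xu = 0)
  (HG3c : is_RInt (fun x => g1 x / x) xl xu (ln ((1 + lamU) / (1 - lamL))))
  (* (G4) *)
  (HG4 : forall x, xl <= x <= xu ->
     0 < qof p * g x /\
     0 < qof p * g x * (g1 x + 1) - (1 + qof p) * x * g1 x /\
     0 < qof p * (g x - x * g1 x) /\
     0 < g1 x + 1)
  (* (G5) *)
  (HG5 : forall x, xl < x < xu -> 0 < g1 x / x) :
  exists mh s1h s2h : R -> R,
    let ah := fun x => alphaF rho mu1 mu2 sig1 sig2 p delta (mh x) (s1h x) (s2h x) in
    let bh := fun x => betaF rho mu1 mu2 sig1 sig2 p (mh x) (s1h x) (s2h x) in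
    let ch := fun x => gammaF rho (s1h x) (s2h x) in
    let t1h := fun x => theta1 rho mu1 mu2 sig1 sig2 (mh x) (s1h x) (s2h x) in
    let t2h := fun x => theta2 rho mu1 mu2 sig1 sig2 (mh x) (s1h x) (s2h x) in
    let I := fun x => xl <= x <= xu in
    let Io := fun x => xl < x < xu in
    (* 1. the minimizer exists and is unique *)
    (forall x, I x ->
       s1h x <> - sig1 /\
       objG rho mu1 mu2 sig1 sig2 p delta x (g x) (g1 x) (mh x) (s1h x) (s2h x)
         = Finite 0 /\
       (forall m s1 s2, s1 <> - sig1 ->
          objG rho mu1 mu2 sig1 sig2 p delta x (g x) (g1 x) m s1 s2 = Finite 0 ->
          m = mh x /\ s1 = s1h x /\ s2 = s2h x)) /\
    (* 2. Lipschitz regularity *)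
    lipschitz_on I ah /\ lipschitz_on I bh /\ lipschitz_on I ch /\
    lipschitz_on I t1h /\ lipschitz_on I t2h /\
    lipschitz_on Io (fun x => s1h x / g1 x) /\
    lipschitz_on Io (fun x => s2h x / g1 x) /\
    lipschitz_on Io (fun x => bh x / g1 x) /\
    (* 3. the ODE, in the interior ... *)
    (forall x, Io x -> exists d,
       is_derive (fun y => y / g1 y) x d /\
       - ah x * g1 x - (mh x + bh x) + ch x * d = 0) /\
    (* ... and at the end points, where gamma_hat * (x/g')' is understood as
       its limit from inside the interval *)
    filterlim (fun y => ch y * Derive (fun z => z / g1 z) y) (at_right xl)
      (locally (ah xl * g1 xl + (mh xl + bh xl))) /\
    filterlim (fun y => ch y * Derive (fun z => z / g1 z) y) (at_left xu)
      (locally (ah xu * g1 xu + (mh xu + bh xu))).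
Proof.
  set (q := qof p).
  assert (H1q : 0 < 1+q) by (apply onepq_pos; auto).
  assert (Hab : xl <= xu) by lra.
  assert (HI1 : forall x, xl <= x <= xu -> g1 x = 0 \/ 0 < g1 x / x).
  { intros x Hx. destruct (Req_dec x xl) as [->|]; [left; auto|].
    destruct (Req_dec x xu) as [->|]; [left; auto|]. right; apply HG5; lra. }
  assert (Hg1n : forall x, xl < x < xu -> g1 x <> 0).
  { intros x Hx E. specialize (HG5 x Hx). rewrite E in HG5. unfold Rdiv in HG5.
    rewrite Rmult_0_l in HG5. lra. }
  destruct (cont_bounded xl xu g2 Hab) as [M2 HM2].
  { intros; apply HC2; auto. }
  assert (Lg1 : LB (fun y => xl <= y <= xu) g1).
  { apply lip_LB; auto. apply (mvt_lip xl xu g1 g2 M2); auto. intros; apply HC2; auto. }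
  assert (Lg : LB (fun y => xl <= y <= xu) g).
  { apply lip_LB; auto. destruct Lg1 as [_ [M1 HM1]].
    apply (mvt_lip xl xu g g1 M1); auto. intros; apply HC2; auto. }
  assert (Lx : LB (fun y => xl <= y <= xu) (fun x => x)) by apply LB_id.
  destruct (lip_pos_lb xl xu (fun x => q * g x) Hab) as [c1 [Hc1 Hc1']].
  { assert (LB (fun y => xl <= y <= xu) (fun x => q * g x)) by lb. apply H. }
  { intros x Hx. apply (HG4 x Hx). }
  assert (LP : LB (fun y => xl <= y <= xu) (fun x => Pv q x (g x) (g1 x))) by (unfold Pv; lb).
  destruct (lip_pos_lb xl xu (fun x => Pv q x (g x) (g1 x)) Hab) as [c2 [Hc2 Hc2']].
  { apply LP. }
  { intros x Hx. apply (HG4 x Hx). }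
  assert (LG11 : LB (fun y => xl <= y <= xu) (fun x => g1 x + 1)) by lb.
  destruct (lip_pos_lb xl xu (fun x => g1 x + 1) Hab) as [c3 [Hc3 Hc3']].
  { apply LG11. }
  { intros x Hx. apply (HG4 x Hx). }
  pose (S1 := fun x => S1v sig1 q x (g x) (g1 x)).
  pose (S2 := fun x => S2v rho mu2 sig1 sig2 q x (g x) (g1 x)).
  pose (s1h := fun x => g1 x * S1 x).
  pose (s2h := fun x => g1 x * S2 x).
  pose (th := fun x => tv sig1 q x (g x) (s1h x)).
  pose (mh := fun x => Mf rho mu1 mu2 sig1 sig2 (th x) (s1h x) (s2h x)).
  assert (LS1 : LB (fun y => xl <= y <= xu) S1).
  { unfold S1, S1v.
    apply (LB_div _ (fun x => sig1 * (x - q * g x)) (fun x => Pv q x (g x) (g1 x)) c2); auto.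
    - intros x Hx. specialize (Hc2' x Hx). rewrite Rabs_right; lra.
    - lb. }
  assert (LS2 : LB (fun y => xl <= y <= xu) S2).
  { unfold S2, S2v. fold (S1v sig1 q).
    apply (LB_minus _ (fun x => ((1 + q) * (mu2 / sig2) - rho * sig1) / (g1 x + 1))
                      (fun x => rho * S1 x)).
    - apply (LB_div _ (fun _ => ((1 + q) * (mu2 / sig2) - rho * sig1)) (fun x => g1 x + 1) c3); auto.
      + intros x Hx. specialize (Hc3' x Hx). rewrite Rabs_right; lra.
      + apply LB_const.
    - lb. }
  assert (Ls1 : LB (fun y => xl <= y <= xu) s1h) by (unfold s1h; lb).
  assert (Ls2 : LB (fun y => xl <= y <= xu) s2h) by (unfold s2h; lb).
  assert (Lth : LB (fun y => xl <= y <= xu) th).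
  { unfold th, tv.
    apply (LB_div _ (fun x => x * ((1 + q) * s1h x + sig1)) (fun x => q * (1 + q) * g x) ((1+q)*c1)).
    - apply Rmult_lt_0_compat; auto.
    - intros x Hx. specialize (Hc1' x Hx). rewrite Rabs_right.
      + replace (q * (1 + q) * g x) with ((1+q) * (q * g x)) by ring.
        apply Rmult_le_compat_l; lra.
      + replace (q * (1 + q) * g x) with ((1+q) * (q * g x)) by ring.
        left. apply Rmult_lt_0_compat; lra.
    - lb.
    - lb. }
  assert (Lmh : LB (fun y => xl <= y <= xu) mh) by (unfold mh, Mf; lb).
  assert (HP1 : forall x, xl <= x <= xu ->
    s1h x <> - sig1 /\
    objG rho mu1 mu2 sig1 sig2 p delta x (g x) (g1 x) (mh x) (s1h x) (s2h x) = Finite 0 /\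
    (forall m s1 s2, s1 <> - sig1 ->
       objG rho mu1 mu2 sig1 sig2 p delta x (g x) (g1 x) m s1 s2 = Finite 0 ->
       m = mh x /\ s1 = s1h x /\ s2 = s2h x)).
  { intros x Hx. destruct (HG4 x Hx) as [A1 [A2 [A3 A4]]].
    exact (part1_pt rho mu1 mu2 sig1 sig2 p delta x (g x) (g1 x) Hrho Hsig1 Hsig2 Hp Hp0
             A1 A2 A4 A3 (HI1 x Hx) (HG2 x Hx)). }
  assert (Htm : forall x, xl <= x <= xu ->
    theta1 rho mu1 mu2 sig1 sig2 (mh x) (s1h x) (s2h x) = th x).
  { intros x Hx. destruct (HP1 x Hx) as [Hn _]. unfold mh. apply theta1_Mf.
    - lra.
    - assert (0 < 1 - rho^2) by nra. lra.
    - lra. }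
  exists mh, s1h, s2h.
  intros ah bh ch t1h t2h I Io.
  assert (La : LB I ah).
  { apply (LB_ext I (fun x => (1+q)*delta - q*(1+q)/2*(th x^2 + (mu2/sig2 - rho*th x)^2
              + 2*rho*th x*(mu2/sig2 - rho*th x)))).
    - intros x Hx. unfold ah, alphaF, theta2. cbv zeta. rewrite Htm by auto. reflexivity.
    - unfold I. lb. }
  assert (Lb : LB I bh).
  { apply (LB_ext I (fun x => q*((s1h x + rho*s2h x)*th x
              + (rho*s1h x + s2h x)*(mu2/sig2 - rho*th x)))).
    - intros x Hx. unfold bh, betaF, theta2. cbv zeta. rewrite Htm by auto. reflexivity.
    - unfold I. lb. }
  assert (Lc : LB I ch) by (unfold I, ch, gammaF; lb).
  assert (Lt1 : LB I t1h).
  { apply (LB_ext I th).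
    - intros x Hx. unfold t1h. rewrite Htm by auto. reflexivity.
    - auto. }
  assert (Lt2 : LB I t2h).
  { apply (LB_ext I (fun x => mu2/sig2 - rho * th x)).
    - intros x Hx. unfold t2h, theta2. rewrite Htm by auto. reflexivity.
    - unfold I. lb. }
  assert (HODE : forall x, Io x -> exists d,
       is_derive (fun y => y / g1 y) x d /\
       - ah x * g1 x - (mh x + bh x) + ch x * d = 0).
  { intros x Hx. unfold Io in Hx.
    assert (HxI : xl <= x <= xu) by lra.
    assert (Hgd : is_derive g x (g1 x)) by (apply (deriv_int xl xu); auto; apply HC2; auto).
    assert (Hg1d : is_derive g1 x (g2 x)) by (apply (deriv_int xl xu); auto; apply HC2; auto).
    pose proof (Hg1n x Hx) as Hn.
    exists ((1 * g1 x - x * g2 x) / (g1 x)^2). split.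
    - auto_derive.
      + repeat split; auto. exists (g2 x); auto.
      + replace (Derive (fun x0 : R => g1 x0) x) with (g2 x)
          by (symmetry; apply is_derive_unique; auto).
        field. auto.
    - set (h := fun y => - ah x * g y - (mh x + bh x) * y + ch x * (y / g1 y) + sgnR p).
      assert (Hhd : is_derive h x (- ah x * g1 x - (mh x + bh x) + ch x * ((1 * g1 x - x * g2 x) / (g1 x)^2))).
      { unfold h. auto_derive.
        - repeat split; auto; [exists (g1 x) | exists (g2 x)]; auto.
        - replace (Derive (fun x0 : R => g x0) x) with (g1 x)
            by (symmetry; apply is_derive_unique; auto).
          replace (Derive (fun x0 : R => g1 x0) x) with (g2 x)
            by (symmetry; apply is_derive_unique; auto).
          field. auto. }
      destruct (HP1 x HxI) as [Hne [H0 _]].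
      apply (fermat h x _ (Rmin (x - xl) (xu - x))); auto.
      + apply Rmin_glb_lt; lra.
      + intros y Hy.
        assert (Rmin (x - xl) (xu - x) <= x - xl) by apply Rmin_l.
        assert (Rmin (x - xl) (xu - x) <= xu - x) by apply Rmin_r.
        assert (HyI : xl < y < xu) by lra.
        pose proof (Hg1n y HyI) as Hny.
        destruct (HG2 y ltac:(lra)) as [Hge _].
        specialize (Hge (mh x) (s1h x) (s2h x) Hne).
        unfold objG in Hge, H0. cbv zeta in Hge, H0.
        destruct (Req_EM_T (g1 y) 0); [contradiction|].
        destruct (Req_EM_T (g1 x) 0); [contradiction|].
        simpl in Hge. injection H0 as H0.
        unfold h, ah, bh, ch. lra. }
  assert (HIo : forall x, Io x -> I x) by (unfold Io, I; intros; lra).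
  assert (LR : LB I (fun y => ah y * g1 y + (mh y + bh y))) by (unfold I in *; lb).
  assert (HRT : forall y, xl < y < xu ->
     ah y * g1 y + (mh y + bh y) = ch y * Derive (fun z => z / g1 z) y).
  { intros y Hy. destruct (HODE y Hy) as [d [Hd He]].
    replace (Derive (fun z => z / g1 z) y) with d by (symmetry; apply is_derive_unique; auto).
    lra. }
  split; [intros x Hx; apply HP1; auto|].
  split; [apply La|].
  split; [apply Lb|].
  split; [apply Lc|].
  split; [apply Lt1|].
  split; [apply Lt2|].
  split.
  { apply (LB_ext Io S1).
    - intros x Hx. unfold s1h. field. apply Hg1n; auto.
    - apply (LB_sub I); auto. }
  split.
  { apply (LB_ext Io S2).
    - intros x Hx. unfold s2h. field. apply Hg1n; auto.
    - apply (LB_sub I); auto. }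
  split.
  { apply (LB_ext Io (fun x => q*((1-rho^2)*S1 x*th x + rho*(mu2/sig2)*S1 x + (mu2/sig2)*S2 x))).
    - intros x Hx. unfold bh, betaF, theta2. cbv zeta. rewrite Htm by (apply HIo; auto).
      unfold s1h, s2h. fold q. field.
      repeat split; first [apply Hg1n; exact Hx | lra].
    - apply (LB_sub I); auto. unfold I; lb. }
  split; [apply HODE|].
  split.
  - apply (lim_ext_right xl xu (fun y => ah y * g1 y + (mh y + bh y))); auto.
    apply (lim_right xl xu (fun y => ah y * g1 y + (mh y + bh y))); auto. apply LR.
  - apply (lim_ext_left xl xu (fun y => ah y * g1 y + (mh y + bh y))); auto.
    apply (lim_left xl xu (fun y => ah y * g1 y + (mh y + bh y))); auto. apply LR.
Qed.
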